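(* Let $\Omega\subset\mathbb R^3$ be a bounded domain containing the origin and $k\ge0$ an integer. Then $$\mathbb P_{k+1}(\Omega; \mathbb T) = (\mathbb P_k(\Omega; \mathbb S)\times\boldsymbol x)\oplus\operatorname{dev}\operatorname{grad}\mathbb P_{k+2}(\Omega; \mathbb R^3),$$ where $\mathbb P_k(\Omega;\mathbb S)\times\boldsymbol x=\{\boldsymbol\tau\times\boldsymbol x:\boldsymbol\tau\in\mathbb P_k(\Omega;\mathbb S)\}$.
   Context: $\mathbb S,\mathbb T$: real symmetric, resp. trace-free, $3\times3$ matrices; $\mathbb P_m(\Omega;X)$: $X$-valued polynomials of total degree $\le m$. $\boldsymbol x$ is the position vector; $\boldsymbol\tau\times\boldsymbol x$ is the matrix whose $i$-th row is (row $i$ of $\boldsymbol\tau$)$\times\boldsymbol x$. $\operatorname{grad}\boldsymbol u=(\partial_ju_i)_{ij}$ and $\operatorname{dev}\boldsymbol A=\boldsymbol A-\frac13\operatorname{tr}(\boldsymbol A)\boldsymbol I$. *)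

(* Defs.v *)
From HB Require Import structures.
From mathcomp Require Import all_boot all_order all_algebra.
From mathcomp Require Import mpoly.
Set Implicit Arguments. Unset Strict Implicit. Unset Printing Implicit Defensive.
Import GRing.Theory.
Local Open Scope ring_scope.

(* Polynomials in the three coordinates x_0,x_1,x_2 of R^3, with coefficients
   in a real field R.  A polynomial of total degree <= d has msize <= d.+1. *)
Notation Poly3 R := {mpoly R[3]}.

Definition pdeg_le (R : realFieldType) (d : nat) (p : Poly3 R) : Prop :=
  (msize p <= d.+1)%N.

Definition mx_deg_le (R : realFieldType) (d : nat) (A : 'M[Poly3 R]_3) : Prop :=
  forall i j, pdeg_le d (A i j).

Definition vec_deg_le (R : realFieldType) (d : nat) (u : 'I_3 -> Poly3 R) : Prop :=
  forall i, pdeg_le d (u i).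

Definition symmetric_mx (R : realFieldType) (A : 'M[Poly3 R]_3) : Prop := A^T = A.
Definition tracefree_mx (R : realFieldType) (A : 'M[Poly3 R]_3) : Prop := \tr A = 0.

Definition nxt3 (j : 'I_3) : 'I_3 := Ordinal (ltn_pmod j.+1 (isT : (0 < 3)%N)).

Definition posx (R : realFieldType) (j : 'I_3) : Poly3 R := 'X_j.

(* tau \times x : row i is (row i of tau) \times x, where
   (a \times b)_j = a_{j+1} b_{j+2} - a_{j+2} b_{j+1} (indices mod 3). *)
Definition crossx (R : realFieldType) (tau : 'M[Poly3 R]_3) : 'M[Poly3 R]_3 :=
  \matrix_(i, j) (tau i (nxt3 j) * posx R (nxt3 (nxt3 j))
                  - tau i (nxt3 (nxt3 j)) * posx R (nxt3 j)).

Definition gradv (R : realFieldType) (u : 'I_3 -> Poly3 R) : 'M[Poly3 R]_3 :=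
  \matrix_(i, j) mderiv j (u i).

Definition devm (R : realFieldType) (A : 'M[Poly3 R]_3) : 'M[Poly3 R]_3 :=
  A - ((3%:R : R)^-1 *: \tr A)%:M.

(* Main.v *)
Require Import Defs.
From HB Require Import structures.
From mathcomp Require Import all_boot all_order all_algebra.
From mathcomp Require Import mpoly.
From mathcomp Require Import ring lra.
Import GRing.Theory Num.Theory.
Set Implicit Arguments. Unset Strict Implicit.
Local Open Scope ring_scope.

Section S.
Variable R : realFieldType.
Local Notation P := {mpoly R[3]}.
Implicit Types p q : P.

Definition Eu p : P := \sum_(j < 3) 'X_j * mderiv j p.

Lemma Eu_is_linear : linear Eu.
Proof.
move=> c p q; rewrite /Eu scaler_sumr -big_split /=; apply: eq_bigr => j _.
by rewrite mderivD mderivZ mulrDr scalerAr.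
Qed.

HB.instance Definition _ :=
  GRing.isLinear.Build R P P _ Eu Eu_is_linear.

Lemma mderivXU i j : mderiv i ('X_j : P) = (j == i)%:R.
Proof.
rewrite mderivX mnm1E; case: eqP => [->|_]; last by rewrite scale0r.
have -> : (U_(i) - U_(i) = 0 :> 'X_{1..3})%MM by apply/mnmP=> l; rewrite !mnmE subnn.
by rewrite mpolyX0 scale1r.
Qed.

Lemma Eu_X m : Eu 'X_[m] = (mdeg m)%:R *: 'X_[m].
Proof.
rewrite /Eu mdegE natr_sum scaler_suml; apply: eq_bigr => j _.
rewrite mderivX -scalerAr; case: (posnP (m j)) => [->|hj]; first by rewrite !scale0r.
congr (_ *: _); rewrite -mpolyXD addmC submK //.
by apply/mnm_lepP => i; rewrite mnm1E; case: eqP => [<-|] //.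
Qed.

Lemma mcoeff_Eu p m : (Eu p)@_m = (mdeg m)%:R * p@_m.
Proof.
set d := (mdeg m)%:R.
rewrite {1 2}(mpolyE p) (linear_sum Eu) !raddf_sum mulr_sumr.
apply: eq_bigr => m' _; rewrite linearZ /= Eu_X !mcoeffZ mcoeffX.
by rewrite /d; case: eqP => [->|]; rewrite ?mulr0 ?mulr1 ?mulr0 //; ring.
Qed.

Lemma eul_coef p c m : Eu p = c *: p -> p@_m != 0 -> (mdeg m)%:R = c.
Proof.
move=> h nz; have := mcoeff_Eu p m; rewrite h mcoeffZ => /eqP.
by rewrite -subr_eq0 -mulrBl mulf_eq0 (negbTE nz) orbF subr_eq0 => /eqP.
Qed.

Lemma eulN1 p : Eu p = -1 *: p -> p = 0.
Proof.
move=> h; apply/mpolyP => m; rewrite mcoeff0; apply/eqP/negPn/negP => nz.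
have e := eul_coef h nz; have : (0 : R) <= (mdeg m)%:R by [].
by rewrite e; lra.
Qed.

Lemma eul_msize p c d : Eu p = c *: p -> (forall e : nat, e%:R = c -> (e < d)%N) ->
  (msize p <= d)%N.
Proof.
move=> h hd; rewrite msizeE; apply/bigmax_leqP_seq => m hm _.
by apply: hd; apply: (eul_coef h); rewrite -mcoeff_msupp.
Qed.


Lemma Eu_mul p q : Eu (p * q) = Eu p * q + p * Eu q.
Proof.
rewrite /Eu mulr_suml mulr_sumr -big_split /=; apply: eq_bigr => j _.
by rewrite mderivM; ring.
Qed.

Lemma Eu_Xj j : Eu ('X_j : P) = 'X_j.
Proof. by rewrite Eu_X mdeg1 scale1r. Qed.

Lemma sum_delta (F : 'I_3 -> P) i : \sum_(j < 3) (j == i)%:R * F j = F i.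
Proof.
rewrite (bigD1 i) //= eqxx mul1r big1 ?addr0 // => j /negbTE ->.
by rewrite mul0r.
Qed.

Lemma mderiv_Eu i p : mderiv i (Eu p) = Eu (mderiv i p) + mderiv i p.
Proof.
rewrite /Eu raddf_sum /=.
have -> : \sum_(j < 3) mderiv i ('X_j * mderiv j p) =
   \sum_(j < 3) 'X_j * mderiv j (mderiv i p) + \sum_(j < 3) (j == i)%:R * mderiv j p.
  rewrite -big_split /=; apply: eq_bigr => j _.
  by rewrite mderivM mderivXU mderiv_comm addrC.
by rewrite sum_delta.
Qed.

Lemma eul_deriv i p c : Eu p = c *: p -> Eu (mderiv i p) = (c - 1) *: mderiv i p.
Proof.
move=> h; have := mderiv_Eu i p; rewrite h mderivZ => e.
by rewrite scalerBl scale1r e addrK.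
Qed.

Lemma eul_mul p q a b : Eu p = a *: p -> Eu q = b *: q -> Eu (p * q) = (a + b) *: (p * q).
Proof.
by move=> hp hq; rewrite Eu_mul hp hq scalerDl -scalerAl -scalerAr.
Qed.

Definition i0 : 'I_3 := @Ordinal 3 0 isT.
Definition i1 : 'I_3 := @Ordinal 3 1 isT.
Definition i2 : 'I_3 := @Ordinal 3 2 isT.

Lemma ord3P (j : 'I_3) : j = i0 \/ j = i1 \/ j = i2.
Proof.
case: j => [[|[|[|//]]]] Hj.
- by left; apply/val_inj.
- by right; left; apply/val_inj.
- by right; right; apply/val_inj.
Qed.

Lemma nxt0 : nxt3 i0 = i1. Proof. exact/val_inj. Qed.
Lemma nxt1 : nxt3 i1 = i2. Proof. exact/val_inj. Qed.
Lemma nxt2 : nxt3 i2 = i0. Proof. exact/val_inj. Qed.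

Lemma sum3 (F : 'I_3 -> P) : \sum_(j < 3) F j = F i0 + F i1 + F i2.
Proof.
rewrite !big_ord_recl big_ord0 addr0 addrA; congr (F _ + F _ + F _); exact/val_inj.
Qed.

Definition curl (v : 'I_3 -> P) (a : 'I_3) : P :=
  mderiv (nxt3 a) (v (nxt3 (nxt3 a))) - mderiv (nxt3 (nxt3 a)) (v (nxt3 a)).

Definition dotx (v : 'I_3 -> P) : P := \sum_(l < 3) v l * 'X_l.

Lemma curl_cross v j :
  curl v (nxt3 j) * 'X_(nxt3 (nxt3 j)) - curl v (nxt3 (nxt3 j)) * 'X_(nxt3 j)
  = Eu (v j) + v j - mderiv j (dotx v).
Proof.
rewrite /curl /Eu /dotx !sum3.
case: (ord3P j) => [->|[->|->]]; rewrite ?(nxt0, nxt1, nxt2);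
  rewrite !raddfD /= !mderivM !mderivXU /=; ring.
Qed.

Lemma devmE (A : 'M[P]_3) i j : devm A i j = A i j - (3%:R^-1 *: \tr A) *+ (i == j).
Proof. by rewrite !mxE. Qed.

Lemma tr_gradv (u : 'I_3 -> P) : \tr (gradv u) = \sum_i mderiv i (u i).
Proof. by rewrite /mxtrace; apply: eq_bigr => i _; rewrite mxE. Qed.

Lemma crossx_dotx (tau : 'M[P]_3) i : \sum_j crossx tau i j * 'X_j = 0.
Proof.
rewrite sum3 !mxE /posx ?(nxt0, nxt1, nxt2); ring.
Qed.

Lemma devgrad_dotx (u : 'I_3 -> P) i :
  \sum_j devm (gradv u) i j * 'X_j = Eu (u i) - (3%:R^-1 *: \tr (gradv u)) * 'X_i.
Proof.
set D := \tr _; rewrite /Eu !sum3 !devmE !mxE -/D.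
by case: (ord3P i) => [->|[->|->]] /=; ring.
Qed.


Lemma three_neq0 : (3%:R : R) != 0. Proof. by rewrite pnatr_eq0. Qed.

Lemma aux13 (x : R) : 1 - x = 0 -> 3%:R * x = 1 -> False.
Proof. move=> *; lra. Qed.

Lemma part4 (tau : 'M[P]_3) (u : 'I_3 -> P) :
  crossx tau = devm (gradv u) -> devm (gradv u) = 0.
Proof.
move=> H.
set D := \tr (gradv u).
set c : R := 3%:R^-1.
have e i : Eu (u i) - (c *: D) * 'X_i = 0.
  by rewrite -devgrad_dotx -H crossx_dotx.
have hD : D = \sum_i mderiv i (u i) by rewrite /D tr_gradv.
have h3 : (3%:R : R) * c = 1 by rewrite /c divff ?three_neq0.
have ED : Eu D = 0.
  have S1 : \sum_i mderiv i (Eu (u i)) = Eu D + D.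
    rewrite hD linear_sum -big_split /=; apply: eq_bigr => i _; exact: mderiv_Eu.
  have S2 : \sum_i mderiv i ((c *: D) * 'X_i) = Eu (c *: D) + 3%:R *: (c *: D).
    rewrite /Eu !sum3 !mderivM !mderivXU /= scaler_nat; ring.
  have : \sum_i mderiv i (Eu (u i) - (c *: D) * 'X_i) = 0.
    by rewrite big1 // => i _; rewrite e raddf0.
  rewrite (eq_bigr (fun i => mderiv i (Eu (u i)) - mderiv i ((c *: D) * 'X_i)));
    last by move=> i _; rewrite raddfB.
  rewrite sumrB S1 S2 linearZ /= scalerA h3 scale1r opprD addrACA subrr addr0.
  rewrite -{1}[Eu D]scale1r -scalerBl => /eqP; rewrite scaler_eq0.
  case/orP=> [/eqP h|/eqP //]; exfalso; exact: aux13 h h3.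
have dD j : mderiv j D = 0.
  apply: eulN1; rewrite (eul_deriv j (c := 0)) ?sub0r //.
  by rewrite ED scale0r.
apply/matrixP => i j; rewrite devmE -/D [gradv u i j]mxE [RHS]mxE.
apply: eulN1.
have := congr1 (mderiv j) (e i).
rewrite raddf0 raddfB /= mderiv_Eu mderivM mderivZ dD scaler0 mul0r add0r mderivXU.
move=> h.
rewrite raddfB /= raddfMn /= linearZ /= ED scaler0 mul0rn subr0.
apply/eqP; rewrite -subr_eq0; apply/eqP; rewrite -h.
rewrite -/c scaleN1r opprK mulr_natr; ring.
Qed.


Lemma msize_le_coef p d : (forall m, (d <= mdeg m)%N -> p@_m = 0) -> (msize p <= d)%N.
Proof.
move=> h; rewrite msizeE; apply/bigmax_leqP_seq => m hm _.
rewrite ltnNge; apply/negP => /h/eqP; by rewrite mcoeff_eq0 hm.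
Qed.

Lemma msizeD_le' p q d : (msize p <= d)%N -> (msize q <= d)%N -> (msize (p + q) <= d)%N.
Proof.
move=> hp hq; apply: leq_trans (mmeasureD_le _ _ _) _; by rewrite geq_max hp hq.
Qed.

Lemma msizeN' p : msize (- p) = msize p.
Proof. exact: mmeasureN. Qed.

Lemma msizeB_le' p q d : (msize p <= d)%N -> (msize q <= d)%N -> (msize (p - q) <= d)%N.
Proof. by move=> hp hq; apply: msizeD_le' => //; rewrite msizeN'. Qed.

Lemma msizeZ_le' c p d : (msize p <= d)%N -> (msize (c *: p) <= d)%N.
Proof. by move=> h; apply: leq_trans (msizeZ_le _ _) h. Qed.

Lemma msizeMn_le' p n d : (msize p <= d)%N -> (msize (p *+ n) <= d)%N.
Proof.
move=> h; elim: n => [|n ih]; first by rewrite mulr0n msize0.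
by rewrite mulrS msizeD_le'.
Qed.

Lemma msize_sum_le' (F : 'I_3 -> P) d : (forall i, msize (F i) <= d)%N ->
  (msize (\sum_i F i) <= d)%N.
Proof. by move=> h; rewrite sum3 !msizeD_le'. Qed.

Lemma msizeMX_le p j : (msize (p * 'X_j) <= (msize p).+1)%N.
Proof.
have [->|nz] := eqVneq p 0; first by rewrite mul0r msize0.
rewrite msizeM // ?msizeX ?mdeg1 ?addn2 //.
by rewrite -(mmeasure_poly_eq0 mdeg) msizeX.
Qed.

Lemma msize_deriv_le p i : (msize (mderiv i p) <= (msize p).-1)%N.
Proof.
apply: msize_le_coef => m hm; rewrite mcoeff_mderiv.
have : (msize p <= mdeg (m + U_(i)))%N.
  by rewrite mdegD mdeg1 addn1; move: hm; case: (msize p).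
by move/msize_mdeg_ge; rewrite mcoeff_msupp negbK => /eqP ->; rewrite mul0rn.
Qed.

Lemma tr_devm (A : 'M[P]_3) : \tr (devm A) = 0.
Proof.
rewrite /devm raddfB /= mxtrace_scalar -scaler_nat scalerA divff ?three_neq0 //.
by rewrite scale1r subrr.
Qed.

Lemma part1 k (tau : 'M[P]_3) : symmetric_mx tau -> mx_deg_le k tau ->
     tracefree_mx (crossx tau) /\ mx_deg_le k.+1 (crossx tau).
Proof.
move=> hs hd; split.
  rewrite /tracefree_mx /mxtrace sum3 !mxE /posx ?(nxt0, nxt1, nxt2).
  have s i j : tau i j = tau j i by rewrite -{1}hs mxE.
  rewrite (s i1 i0) (s i2 i0) (s i2 i1); ring.
move=> i j; rewrite /pdeg_le mxE /posx.
by apply: msizeB_le'; apply: leq_trans (msizeMX_le _ _) _; apply: hd.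
Qed.

Lemma part2 k (u : 'I_3 -> P) : vec_deg_le k.+2 u ->
     tracefree_mx (devm (gradv u)) /\ mx_deg_le k.+1 (devm (gradv u)).
Proof.
move=> hu; split; first exact: tr_devm.
have hd i j : (msize (mderiv j (u i)) <= k.+2)%N.
  by apply: leq_trans (msize_deriv_le _ _) _; have := hu i; rewrite /pdeg_le; case: (msize (u i)).
move=> i j; rewrite /pdeg_le devmE mxE; apply: msizeB_le' => //.
apply: msizeMn_le'; apply: msizeZ_le'; rewrite tr_gradv; apply: msize_sum_le' => l.
exact: hd.
Qed.


Definition eul (c : R) p := Eu p = c *: p.

Lemma eulD c p q : eul c p -> eul c q -> eul c (p + q).
Proof. by rewrite /eul raddfD /= scalerDr => -> ->. Qed.
Lemma eulN c p : eul c p -> eul c (- p).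
Proof. by rewrite /eul raddfN /= scalerN => ->. Qed.
Lemma eulB c p q : eul c p -> eul c q -> eul c (p - q).
Proof. by move=> hp hq; apply: eulD => //; apply: eulN. Qed.
Lemma eulZ c a p : eul c p -> eul c (a *: p).
Proof. by rewrite /eul linearZ /= => ->; rewrite !scalerA mulrC. Qed.
Lemma eulMn c p m : eul c p -> eul c (p *+ m).
Proof. by rewrite /eul raddfMn /= => ->; rewrite scalerMnr. Qed.
Lemma eul0 c : eul c 0.
Proof. by rewrite /eul raddf0 scaler0. Qed.
Lemma eul_sum c (F : 'I_3 -> P) : (forall i, eul c (F i)) -> eul c (\sum_i F i).
Proof. by move=> h; rewrite sum3; do 2?apply: eulD. Qed.
Lemma eulX j : eul 1 ('X_j : P).
Proof. by rewrite /eul Eu_Xj scale1r. Qed.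
Lemma eul_der c i p : eul c p -> eul (c - 1) (mderiv i p).
Proof. exact: eul_deriv. Qed.
Lemma eulM a b p q : eul a p -> eul b q -> eul (a + b) (p * q).
Proof. exact: eul_mul. Qed.

Lemma eul_curl c v : (forall l, eul c (v l)) -> forall a, eul (c - 1) (curl v a).
Proof. by move=> h a; rewrite /curl; apply: eulB; apply: eul_der. Qed.

Lemma crossxD (A C : 'M[P]_3) : crossx (A + C) = crossx A + crossx C.
Proof. by apply/matrixP => i j; rewrite !mxE; ring. Qed.

Lemma crossx_qx (q : 'I_3 -> P) : crossx (\matrix_(i, j) (q i * 'X_j)) = 0.
Proof. by apply/matrixP => i j; rewrite !mxE /posx; ring. Qed.

Definition skv (T : 'M[P]_3) (l : 'I_3) : P :=
  T (nxt3 l) (nxt3 (nxt3 l)) - T (nxt3 (nxt3 l)) (nxt3 l).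

Lemma tr_crossx (T : 'M[P]_3) : \tr (crossx T) = dotx (skv T).
Proof.
rewrite /mxtrace /dotx /skv !sum3 !mxE /posx ?(nxt0, nxt1, nxt2); ring.
Qed.

Lemma natS_neq0 n : (n.+1%:R : R) != 0.
Proof. by rewrite pnatr_eq0. Qed.

Lemma cross_solve n (B : 'M[P]_3) : \tr B = 0 ->
  (forall i, \sum_j B i j * 'X_j = 0) -> (forall i j, eul n%:R (B i j)) ->
  exists tau, [/\ symmetric_mx tau, (forall i j, eul (n%:R - 1) (tau i j)) & crossx tau = B].
Proof.
move=> htr hdot heu.
pose T0 : 'M[P]_3 := \matrix_(i, j) ((n.+1%:R)^-1 *: curl (fun l => B i l) j).
have hT0 : crossx T0 = B.
  apply/matrixP => i j; rewrite mxE /posx !mxE -!scalerAl -scalerBr curl_cross.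
  have -> : dotx (fun l => B i l) = 0 by rewrite /dotx hdot.
  rewrite raddf0 subr0 heu -{2}[B i j]scale1r -scalerDl scalerA.
  by rewrite -natr1 mulVf ?natr1 ?natS_neq0 // scale1r.
have eT0 i j : eul (n%:R - 1) (T0 i j).
  by rewrite mxE; apply: eulZ; apply: eul_curl => l.
pose s := skv T0.
have es l : eul (n%:R - 1) (s l) by rewrite /s /skv; apply: eulB.
have ds : dotx s = 0 by rewrite /s -tr_crossx hT0.
pose q i := - (n%:R)^-1 *: curl s i.
pose tau := T0 + \matrix_(i, j) (q i * 'X_j).
have tauE i j : tau i j = T0 i j + q i * 'X_j by rewrite /tau !mxE.
exists tau; split.
- have key l : tau (nxt3 l) (nxt3 (nxt3 l)) = tau (nxt3 (nxt3 l)) (nxt3 l).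
    apply/eqP; rewrite -subr_eq0; apply/eqP.
    rewrite !tauE.
    have -> : T0 (nxt3 l) (nxt3 (nxt3 l)) + q (nxt3 l) * 'X_(nxt3 (nxt3 l)) -
      (T0 (nxt3 (nxt3 l)) (nxt3 l) + q (nxt3 (nxt3 l)) * 'X_(nxt3 l)) =
      s l - (n%:R)^-1 *: (curl s (nxt3 l) * 'X_(nxt3 (nxt3 l)) -
                         curl s (nxt3 (nxt3 l)) * 'X_(nxt3 l)).
      rewrite /q /s /skv !scaleNr !mulNr -!scalerAl scalerBr; ring.
    rewrite curl_cross ds raddf0 subr0 (es l).
    have -> : (n%:R - 1) *: s l + s l = n%:R *: s l by rewrite scalerBl scale1r subrK.
    have [n0|nn0] := eqVneq n 0%N.
      have : s l = 0 by apply: eulN1; rewrite (es l) n0 sub0r.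
      by move=> ->; rewrite !scaler0 subrr.
    by rewrite scalerA mulVf ?pnatr_eq0 // scale1r subrr.
  apply/matrixP => i j; rewrite mxE.
  case: (ord3P i) => [->|[->|->]]; case: (ord3P j) => [->|[->|->]] //.
  + by have := key i2; rewrite ?(nxt0, nxt1, nxt2).
  + by have := key i1; rewrite ?(nxt0, nxt1, nxt2).
  + by have := key i2; rewrite ?(nxt0, nxt1, nxt2).
  + by have := key i0; rewrite ?(nxt0, nxt1, nxt2).
  + by have := key i1; rewrite ?(nxt0, nxt1, nxt2).
  + by have := key i0; rewrite ?(nxt0, nxt1, nxt2).
- move=> i j; rewrite tauE; apply: eulD => //.
  have -> : n%:R - 1 = (n%:R - 1 - 1) + 1 :> R by ring.
  apply: eulM; last exact: eulX.
  by rewrite /q; apply: eulZ; apply: eul_curl.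
- by rewrite crossxD crossx_qx addr0.
Qed.


Definition decomp k (A : 'M[P]_3) := exists tau : 'M[P]_3, exists u : 'I_3 -> P,
  [/\ symmetric_mx tau, mx_deg_le k tau, vec_deg_le k.+2 u &
      A = crossx tau + devm (gradv u)].

Lemma scal_id (x : R) : 0 < x ->
  (x + 1)^-1 * (1 + 3%:R^-1 * (x * (3%:R / (2%:R * x)) + 3%:R * (3%:R / (2%:R * x))))
  = 3%:R / (2%:R * x).
Proof.
move=> hx; have hx0 : x != 0 by rewrite lt0r_neq0.
have hx1 : x + 1 != 0 by rewrite lt0r_neq0 //; lra.
by field; rewrite hx0 hx1.
Qed.

Lemma sum_derXi (D : P) : \sum_i mderiv i (D * 'X_i) = Eu D + 3%:R *: D.
Proof. by rewrite /Eu !sum3 !mderivM !mderivXU /= scaler_nat; ring. Qed.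

Lemma subE (X Y : 'M[P]_3) i j : (X - Y) i j = X i j - Y i j.
Proof. by rewrite !mxE. Qed.

Lemma homog_decomp k n (A : 'M[P]_3) : (n <= k.+1)%N -> \tr A = 0 ->
  (forall i j, eul n%:R (A i j)) -> decomp k A.
Proof.
move=> hn htr hA.
pose w i := \sum_j A i j * 'X_j.
have ew i : eul n.+1%:R (w i).
  by rewrite -natr1; apply: eul_sum => j; apply: eulM => //; apply: eulX.
pose dw := \sum_i mderiv i (w i).
have hn1 : n.+1%:R - 1 = n%:R :> R by rewrite -natr1 addrK.
have edw : eul n%:R dw by apply: eul_sum => i; rewrite -hn1; apply: eul_der.
pose cD : R := 3%:R / (2%:R * n%:R).
pose D := cD *: dw.
have eD : eul n%:R D by apply: eulZ.
pose u i := (n.+1%:R)^-1 *: (w i + 3%:R^-1 *: (D * 'X_i)).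
have eDX i : eul n.+1%:R (D * 'X_i) by rewrite -natr1; apply: eulM => //; apply: eulX.
have eu i : eul n.+1%:R (u i) by apply: eulZ; apply: eulD => //; apply: eulZ.
have Eu_u i : Eu (u i) = w i + 3%:R^-1 *: (D * 'X_i).
  by rewrite (eu i) /u scalerA mulfV ?natS_neq0 // scale1r.
have trD : \tr (gradv u) = D.
  rewrite tr_gradv.
  have -> : \sum_i mderiv i (u i) =
      (n.+1%:R)^-1 *: (dw + 3%:R^-1 *: \sum_i mderiv i (D * 'X_i)).
    rewrite /dw scalerDr !scaler_sumr -big_split /=.
    by apply: eq_bigr => i _; rewrite /u mderivZ mderivD mderivZ scalerDr.
  rewrite sum_derXi eD.
  have -> : dw + 3%:R^-1 *: (n%:R *: D + 3%:R *: D) =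
     (1 + 3%:R^-1 * (n%:R * cD + 3%:R * cD)) *: dw.
    by rewrite /D !scalerA -scalerDl scalerA scalerDl scale1r mulrDr mulrA mulrA.
  rewrite scalerA.
  have [n0|npos] := posnP n.
    suff hdw : dw = 0 by rewrite /D hdw !scaler0.
    have z i j l : mderiv l (A i j) = 0.
      by apply: eulN1; have := eul_der l (hA i j); rewrite /eul n0 sub0r.
    transitivity (\tr A); last exact: htr.
    rewrite /dw /w /mxtrace !sum3 !raddfD /= !mderivM !mderivXU /= !z; ring.
  rewrite /D; congr (_ *: _); rewrite -natr1 /cD; apply: scal_id.
  by rewrite ltr0n.
pose B := A - devm (gradv u).
have htrB : \tr B = 0 by rewrite /B raddfB /= htr tr_devm subrr.
have hdotB i : \sum_j B i j * 'X_j = 0.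
  rewrite (eq_bigr (fun j => A i j * 'X_j - devm (gradv u) i j * 'X_j)); last first.
    by move=> j _; rewrite /B subE mulrBl.
  by rewrite sumrB devgrad_dotx Eu_u trD -/(w i) /D -!scalerAl addrK subrr.
have heB i j : eul n%:R (B i j).
  rewrite /B subE devmE mxE; apply: eulB => //; apply: eulB.
    by rewrite -hn1; apply: eul_der.
  by apply: eulMn; apply: eulZ; rewrite trD.
have [tau [hs he hc]] := cross_solve htrB hdotB heB.
exists tau, u; split => //.
- move=> i j; rewrite /pdeg_le; apply: eul_msize (he i j) _ => e he'.
  have : (e.+1%:R : R) = n%:R by rewrite -natr1 he' subrK.
  by move/eqP; rewrite eqr_nat => /eqP en; rewrite -en in hn.
- move=> i; rewrite /pdeg_le; apply: eul_msize (eu i) _ => e he'.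
  by move/eqP: he'; rewrite eqr_nat => /eqP ->; rewrite !ltnS.
- by rewrite hc /B subrK.
Qed.


Lemma gradvD (u v : 'I_3 -> P) : gradv (fun i => u i + v i) = gradv u + gradv v.
Proof. by apply/matrixP => i j; rewrite !mxE mderivD. Qed.

Lemma devmD (X Y : 'M[P]_3) : devm (X + Y) = devm X + devm Y.
Proof.
apply/matrixP => i j; rewrite [RHS]mxE !devmE mxtraceD scalerDr mulrnDl mxE; ring.
Qed.

Lemma decomp0 k : decomp k 0.
Proof.
exists 0, (fun _ => 0); split.
- by rewrite /symmetric_mx trmx0.
- by move=> i j; rewrite mxE /pdeg_le msize0.
- by move=> i; rewrite /pdeg_le msize0.
- apply/matrixP => i j; rewrite [RHS]mxE devmE /mxtrace !sum3 !mxE !mderiv0 /=.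
  by rewrite !addr0 scaler0 mul0rn !mul0r !subrr addr0.
Qed.

Lemma decompD k A C : decomp k A -> decomp k C -> decomp k (A + C).
Proof.
move=> [t1 [u1 [s1 d1 e1 ->]]] [t2 [u2 [s2 d2 e2 ->]]].
exists (t1 + t2), (fun i => u1 i + u2 i); split.
- by rewrite /symmetric_mx linearD /= s1 s2.
- by move=> i j; rewrite /pdeg_le mxE; apply: msizeD_le'; [exact: d1|exact: d2].
- by move=> i; rewrite /pdeg_le; apply: msizeD_le'; [exact: e1|exact: e2].
- by rewrite crossxD gradvD devmD addrACA.
Qed.

Lemma eul_pihomog d p : eul d%:R (pihomog mdeg d p).
Proof.
apply/mpolyP => m; rewrite mcoeff_Eu mcoeffZ.
have [->//|ne] := eqVneq (mdeg m) d.
by rewrite (dhomog_nemf_coeff (pihomogP _ _ _) ne) !mulr0.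
Qed.

Lemma part3 k (A : 'M[P]_3) : tracefree_mx A -> mx_deg_le k.+1 A -> decomp k A.
Proof.
move=> htr hd.
have -> : A = \sum_(d < k.+2) map_mx (pihomog mdeg d) A.
  apply/matrixP => i j; rewrite summxE.
  rewrite {1}(pihomog_partitionE (mf := mdeg) (hd i j)).
  by apply: eq_bigr => d _; rewrite mxE.
apply: (big_ind (decomp k)); [exact: decomp0| exact: decompD|].
move=> d _; apply: (homog_decomp (n := d)).
- by rewrite -ltnS ltn_ord.
- rewrite /mxtrace (eq_bigr (fun i => pihomog mdeg d (A i i))); last by move=> i _; rewrite mxE.
  have htr' : \sum_i A i i = 0 := htr.
  by rewrite -raddf_sum /= htr' raddf0.
- by move=> i j; rewrite mxE; apply: eul_pihomog.
Qed.

End S.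

Theorem lemma3p4 (R : realFieldType) (k : nat) :
  (forall tau : 'M[Poly3 R]_3, symmetric_mx tau -> mx_deg_le k tau ->
     tracefree_mx (crossx tau) /\ mx_deg_le k.+1 (crossx tau))
  /\ (forall u : 'I_3 -> Poly3 R, vec_deg_le k.+2 u ->
     tracefree_mx (devm (gradv u)) /\ mx_deg_le k.+1 (devm (gradv u)))
  /\ (forall A : 'M[Poly3 R]_3, tracefree_mx A -> mx_deg_le k.+1 A ->
     exists tau : 'M[Poly3 R]_3, exists u : 'I_3 -> Poly3 R,
       [/\ symmetric_mx tau, mx_deg_le k tau, vec_deg_le k.+2 u &
           A = crossx tau + devm (gradv u)])
  /\ (forall (tau : 'M[Poly3 R]_3) (u : 'I_3 -> Poly3 R),
       symmetric_mx tau -> mx_deg_le k tau -> vec_deg_le k.+2 u ->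
       crossx tau = devm (gradv u) -> crossx tau = 0).
Proof.
split; first exact: part1.
split; first exact: part2.
split; first exact: part3.
by move=> tau u _ _ _ h; rewrite h; apply: (part4 h).
Qed.
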